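(* Let $(E,\mathcal{P})$ be a random locally convex module over $K$ with base $(\Omega,\mathcal{F},P)$. Then $E^{\ast}_{max}=E^{\ast}_{\varepsilon,\lambda}$; that is, a module homomorphism $f:E\to L^{0}(\mathcal{F},K)$ is continuous from $(E,\mathcal{T}_{c})$ to $(L^{0}(\mathcal{F},K),\mathcal{T}_{\varepsilon,\lambda})$ if and only if it is continuous from $(E,\mathcal{T}_{\varepsilon,\lambda})$ to $(L^{0}(\mathcal{F},K),\mathcal{T}_{\varepsilon,\lambda})$.
   Context: $(\Omega,\mathcal{F},P)$ is a probability space, $K=\mathbb{R}$ or $\mathbb{C}$, and $L^{0}(\mathcal{F},K)$ is the algebra of equivalence classes (modulo a.s. equality) of $K$-valued measurable random variables. $L^0(\mathcal F,\mathbb R)$ is ordered by $\xi\le\eta$ iff $\xi^0\le\eta^0$ a.s. for representatives; $L^{0}_{+}=\{\xi\in L^0(\mathcal F,\mathbb R):\xi\ge 0\}$, $L^{0}_{++}=\{\xi: \xi>0 \text{ a.s. on }\Omega\}$; $|\xi|$ is the pointwise absolute value. An $L^0$-seminorm on a left $L^0(\mathcal F,K)$-module $E$ is a map $\|\cdot\|:E\to L^0_+$ with $\|x+y\|\le\|x\|+\|y\|$ and $\|\xi x\|=|\xi|\,\|x\|$ for all $\xi\in L^0(\mathcal F,K)$, $x,y\in E$. A random locally convex module over $K$ with base $(\Omega,\mathcal F,P)$ is a pair $(E,\mathcal P)$ where $E$ is a left $L^0(\mathcal F,K)$-module and $\mathcal P$ is a family of $L^0$-seminorms on $E$ such that $\bigvee\{\|x\|:\|\cdot\|\in\mathcal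 P\}=0$ implies $x=0$. $\mathcal F(\mathcal P)$ denotes the set of finite subfamilies of $\mathcal P$, and for $\mathcal Q\in\mathcal F(\mathcal P)$, $\|x\|_{\mathcal Q}=\bigvee\{\|x\|:\|\cdot\|\in\mathcal Q\}$. The $(\varepsilon,\lambda)$-topology $\mathcal T_{\varepsilon,\lambda}$ on $E$ is the linear topology with local base at $0$ given by the sets $\{x\in E: P\{\omega:\|x\|_{\mathcal Q}(\omega)<\varepsilon\}>1-\lambda\}$, $\mathcal Q\in\mathcal F(\mathcal P)$, $\varepsilon>0$, $0<\lambda<1$. The locally $L^0$-convex topology $\mathcal T_c$ on $E$: $G\subset E$ is open iff for every $x\in G$ there are $\mathcal Q\in\mathcal F(\mathcal P)$ and $\varepsilon\in L^0_{++}$ with $x+\{y:\|y\|_{\mathcal Q}\le\varepsilon\}\subset G$. $L^0(\mathcal F,K)$ itself is regarded as a random locally convex module with $\mathcal P=\{|\cdot|\}$; then $\mathcal T_{\varepsilon,\lambda}$ on it is the topology of convergence in probability. Module homomorphism means $L^0(\mathcal F,K)$-linear map. $E^\ast_{\varepsilon,\lambda}$ is the set of module homomorphisms $f:E\to L^0(\mathcal F,K)$ continuous from $(E,\mathcal T_{\varepsilon,\lambda})$ to $(L^0(\mathcal F,K),\mathcal T_{\varepsilon,\lambda})$; $E^\ast_{max}$ is the set of module homomorphisms continuous from $(E,\mathcal T_{c})$ to $(L^0(\mathcal F,K),\mathcal T_{\varepsilon,\lambda})$. *)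

(* Defs.v *)
From HB Require Import structures.
From mathcomp Require Import all_boot all_algebra.
From mathcomp Require Import all_classical all_reals all_analysis.
From mathcomp Require Import complex.
From Stdlib Require List.
Set Implicit Arguments. Unset Strict Implicit. Unset Printing Implicit Defensive.
Import GRing.Theory Num.Theory.
Local Open Scope classical_set_scope.
Local Open Scope ring_scope.

(* L^0(F,K) is encoded through representatives: an element of L^0(F,K) is a
   K-valued function on Omega that is measurable ([Kmeas]); two representatives
   denote the same class iff they agree P-a.s.  All equalities/inequalities in
   L^0 are therefore stated a.s. on representatives. *)

Section RLC.
Context (R : realType) (d : measure_display) (T : measurableType d)
        (P : probability T R).
Context (K : comNzRingType) (Kmeas : (T -> K) -> Prop) (Knorm : K -> R).

Definition aeqK (xi eta : T -> K) : Prop := {ae P, forall w, xi w = eta w}.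

Record L0_module (E : zmodType) (sc : (T -> K) -> E -> E) : Prop := {
  sc_ae : forall xi eta x, Kmeas xi -> Kmeas eta -> aeqK xi eta ->
     sc xi x = sc eta x;
  scDl : forall xi eta x, Kmeas xi -> Kmeas eta ->
     sc (fun w => xi w + eta w) x = sc xi x + sc eta x;
  scDr : forall xi x y, Kmeas xi -> sc xi (x + y) = sc xi x + sc xi y;
  scA : forall xi eta x, Kmeas xi -> Kmeas eta ->
     sc (fun w => xi w * eta w) x = sc xi (sc eta x);
  sc1 : forall x, sc (fun _ => 1) x = x }.

Record L0_seminorm (E : zmodType) (sc : (T -> K) -> E -> E)
    (p : E -> T -> R) : Prop := {
  sn_meas : forall x, measurable_fun setT (p x);
  sn_ge0 : forall x, {ae P, forall w, 0 <= p x w};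
  sn_triangle : forall x y, {ae P, forall w, p (x + y) w <= p x w + p y w};
  sn_hom : forall xi x, Kmeas xi ->
     {ae P, forall w, p (sc xi x) w = Knorm (xi w) * p x w} }.

Definition is_L0_sup (S : set (T -> R)) (s : T -> R) : Prop :=
  measurable_fun setT s /\
  (forall g, S g -> {ae P, forall w, g w <= s w}) /\
  (forall u, measurable_fun setT u ->
     (forall g, S g -> {ae P, forall w, g w <= u w}) ->
     {ae P, forall w, s w <= u w}).

Record RLC_module (E : zmodType) (sc : (T -> K) -> E -> E)
    (Pf : set (E -> T -> R)) : Prop := {
  rlc_module : L0_module sc;
  rlc_seminorms : forall p, Pf p -> L0_seminorm sc p;
  rlc_sep : forall x, is_L0_sup [set p x | p in Pf] (fun _ => 0) -> x = 0 }.

Definition lte_prob (r : R) (A : set T) : Prop := (r%:E < P A)%E.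

Section Topologies.
Context (E : zmodType) (sc : (T -> K) -> E -> E) (Pf : set (E -> T -> R)).

Definition finite_subfamily (Q : seq (E -> T -> R)) : Prop :=
  forall p, List.In p Q -> Pf p.

(* ||x||_Q = \/ { ||x|| : ||.|| in Q }  (finite supremum = pointwise max) *)
Definition normQ (Q : seq (E -> T -> R)) (x : E) (w : T) : R :=
  \big[Num.max/0]_(p <- Q) p x w.

Definition el_open (G : set E) : Prop :=
  forall x, G x -> exists Q, finite_subfamily Q /\
    exists eps : R, 0 < eps /\ exists lam : R, 0 < lam < 1 /\
      forall y, lte_prob (1 - lam) [set w | normQ Q (y - x) w < eps] -> G y.

Definition c_open (G : set E) : Prop :=
  forall x, G x -> exists Q, finite_subfamily Q /\
    exists eps : T -> R, measurable_fun setT eps /\ {ae P, forall w, 0 < eps w} /\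
      forall y, {ae P, forall w, normQ Q (y - x) w <= eps w} -> G y.

End Topologies.

(* open sets of the (eps,lambda)-topology (convergence in probability) on
   L^0(F,K), P = {|.|}; a set of classes is given as a set of representatives
   (only its measurable members matter) *)
Definition L0_el_open (G : set (T -> K)) : Prop :=
  forall xi, Kmeas xi -> G xi ->
    exists eps : R, 0 < eps /\ exists lam : R, 0 < lam < 1 /\
      forall eta, Kmeas eta ->
        lte_prob (1 - lam) [set w | Knorm (eta w - xi w) < eps] -> G eta.

Section Duals.
Context (E : zmodType) (sc : (T -> K) -> E -> E) (Pf : set (E -> T -> R)).

Definition L0_module_hom (f : E -> T -> K) : Prop :=
  (forall x, Kmeas (f x)) /\
  (forall x y, aeqK (f (x + y)) (fun w => f x w + f y w)) /\
  (forall xi x, Kmeas xi -> aeqK (f (sc xi x)) (fun w => xi w * f x w)).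

Definition cont_el (f : E -> T -> K) : Prop :=
  forall G, L0_el_open G -> el_open Pf [set x | G (f x)].

Definition cont_c (f : E -> T -> K) : Prop :=
  forall G, L0_el_open G -> c_open Pf [set x | G (f x)].

End Duals.

Definition dual_equality_statement : Prop :=
  forall (E : zmodType) (sc : (T -> K) -> E -> E) (Pf : set (E -> T -> R)),
    RLC_module sc Pf ->
    forall f : E -> T -> K, L0_module_hom sc f ->
      (cont_c Pf f <-> cont_el Pf f).

End RLC.

Definition measR (R : realType) (d : measure_display) (T : measurableType d)
  (xi : T -> R) : Prop := measurable_fun setT xi.

Definition measC (R : realType) (d : measure_display) (T : measurableType d)
  (xi : T -> R[i]) : Prop :=
  measurable_fun setT (fun w => complex.Re (xi w)) /\
  measurable_fun setT (fun w => complex.Im (xi w)).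

Definition absC (R : realType) (z : R[i]) : R :=
  Num.sqrt (complex.Re z ^+ 2 + complex.Im z ^+ 2).

(* Main.v *)
Require Import Defs.
From HB Require Import structures.
From mathcomp Require Import all_boot all_algebra.
From mathcomp Require Import all_classical all_reals all_analysis.
From mathcomp Require Import complex.
From mathcomp Require Import measurable_realfun.
From mathcomp Require Import lra.
Set Implicit Arguments. Unset Strict Implicit. Unset Printing Implicit Defensive.
Import order.Order.TTheory GRing.Theory Num.Theory.
Local Open Scope classical_set_scope.
Local Open Scope ring_scope.


Section Gen.
Context (R : realType) (d : measure_display) (T : measurableType d)
        (P : probability T R).

Lemma mset_lt (g h : T -> R) : measurable_fun setT g -> measurable_fun setT h ->
  measurable [set w | g w < h w].
Proof.
move=> mg mh; have := measurable_fun_ltr mg mh measurableT (Y := [set true]) I.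
by rewrite setTI preimage_true.
Qed.

Lemma mset_le (g h : T -> R) : measurable_fun setT g -> measurable_fun setT h ->
  measurable [set w | g w <= h w].
Proof.
move=> mg mh; have := measurable_fun_ler mg mh measurableT (Y := [set true]) I.
by rewrite setTI preimage_true.
Qed.
End Gen.
Section Prob.
Context (R : realType) (d : measure_display) (T : measurableType d)
        (P : probability T R).

Definition pr (A : set T) : R := fine (P A).

Lemma prE A : measurable A -> P A = (pr A)%:E.
Proof. by move=> mA; rewrite /pr fineK // fin_num_measure. Qed.

Lemma pr_ge0 A : measurable A -> 0 <= pr A.
Proof. by move=> mA; rewrite -lee_fin -prE. Qed.

Lemma pr_le1 A : measurable A -> pr A <= 1.
Proof. by move=> mA; rewrite -lee_fin -prE // probability_le1. Qed.

Lemma prT : pr setT = 1.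
Proof. by rewrite /pr probability_setT. Qed.

Lemma pr_le A B : measurable A -> measurable B -> A `<=` B -> pr A <= pr B.
Proof. by move=> mA mB AB; rewrite -lee_fin -!prE // le_measure // inE. Qed.

Lemma prC A : measurable A -> pr (~` A) = 1 - pr A.
Proof.
move=> mA; apply/eqP; rewrite -eqe -prE; last exact: measurableC.
by rewrite probability_setC // prE.
Qed.

Lemma prU A B : measurable A -> measurable B -> pr (A `|` B) <= pr A + pr B.
Proof.
move=> mA mB; rewrite -lee_fin -prE; last exact: measurableU.
by rewrite EFinD -!prE // measureU2.
Qed.

Lemma lte_probP r A : measurable A -> lte_prob P r A <-> r < pr A.
Proof. by move=> mA; rewrite /lte_prob prE // lte_fin. Qed.

Lemma pr_ae (A B : set T) : measurable A -> measurable B ->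
  {ae P, forall w, A w -> B w} -> pr A <= pr B.
Proof.
move=> mA mB [N [mN N0 sN]].
have AB : A `<=` B `|` N.
  move=> w Aw; have [Bw|nBw] := pselect (B w); first by left.
  by right; apply: sN => /(_ Aw).
apply: (le_trans (pr_le mA (measurableU _ _ mB mN) AB)).
apply: (le_trans (prU mB mN)).
by rewrite /pr N0 /= addr0.
Qed.

Lemma pr_ae1 (A : set T) : measurable A -> {ae P, forall w, A w} -> pr A = 1.
Proof.
move=> mA H; apply/eqP; rewrite eq_le pr_le1 //=.
rewrite -prT; apply: pr_ae => //.
by apply: filterS H.
Qed.
Lemma prI A B : measurable A -> measurable B -> pr A + pr B - 1 <= pr (A `&` B).
Proof.
move=> mA mB; have := prU (measurableC mA) (measurableC mB).
rewrite -setCI !prC //; last exact: measurableI.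
by move=> h; lra.
Qed.
Lemma small_set (eta : T -> R) (c : R) : measurable_fun setT eta ->
  {ae P, forall w, 0 < eta w} -> 0 < c ->
  exists d0 : R, 0 < d0 /\ pr [set w | eta w < d0] <= c.
Proof.
move=> meta epos c0.
pose F n := [set w | (n.+1%:R)^-1 <= eta w].
have mF n : measurable (F n) by apply: mset_le => //; exact: measurable_cst.
have mU : measurable (\bigcup_n F n) by exact: bigcupT_measurable.
have homo : {homo F : n m / (n <= m)%N >-> preorder.Order.le n m}.
  move=> n m nm; apply/asboolP => w /=; apply: le_trans.
  by rewrite lef_pV2 ?posrE ?ltr0n // ler_nat.
have H := nondecreasing_cvg_mu (mu := P) mF mU homo.
have U1 : pr (\bigcup_n F n) = 1.
  apply: pr_ae1 => //; apply: filterS epos => w ew.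
  have b0 : 0 <= (eta w)^-1 by rewrite invr_ge0 ltW.
  have hb := archi_boundP b0.
  exists (Num.Def.archi_bound (eta w)^-1) => //; rewrite /F /=.
  rewrite invf_ple ?posrE ?ltr0n //; apply: ltW; apply: lt_le_trans hb _.
  by rewrite ler_nat.
have PU : P (\bigcup_n F n) = 1%:E by rewrite prE // U1.
have {}H : (P \o F) x @[x --> \oo] --> (1%:E : \bar R) by rewrite -PU; exact: H.
have [_ H2] := (fine_cvgP _ _).1 H.
have c1 : 1 - c < 1 by rewrite ltrBlDr ltrDl.
have [N _ HN] := cvgr_gt _ H2 _ c1.
have := HN N (leqnn N) => /= hN.
exists (N.+1%:R^-1); split; first by rewrite invr_gt0 ltr0n.
have sub : [set w | eta w < N.+1%:R^-1] `<=` ~` F N.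
  by move=> w /= h h'; move: h; rewrite ltNge h'.
apply: le_trans (pr_le _ (measurableC (mF N)) sub) _.
  exact: mset_lt.
rewrite prC //; move: hN; rewrite /pr /=; lra.
Qed.
End Prob.

Section Gen2.
Context (R : realType) (d : measure_display) (T : measurableType d)
        (P : probability T R).
Context (K : comNzRingType) (Kmeas : (T -> K) -> Prop) (Knorm : K -> R) (emb : R -> K).
Hypothesis HnM : forall a b, Knorm (a * b) = Knorm a * Knorm b.
Hypothesis HnD : forall a b, Knorm (a + b) <= Knorm a + Knorm b.
Hypothesis Hn0 : Knorm 0 = 0.
Hypothesis Hnge0 : forall a, 0 <= Knorm a.
Hypothesis Hnemb : forall r, Knorm (emb r) = `|r|.
Hypothesis Hmemb : forall g : T -> R, measurable_fun setT g -> Kmeas (fun w => emb (g w)).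
Hypothesis HmN : forall xi, Kmeas xi -> measurable_fun setT (fun w => Knorm (xi w)).
Hypothesis HmNB : forall xi zeta, Kmeas xi -> Kmeas zeta ->
  measurable_fun setT (fun w => Knorm (xi w - zeta w)).

Context (E : zmodType) (sc : (T -> K) -> E -> E) (Pf : set (E -> T -> R)).
Hypothesis hRLC : RLC_module P Kmeas Knorm sc Pf.

Lemma normQ_cons p (Q : seq (E -> T -> R)) (x : E) (w : T) : normQ (p :: Q) x w = Num.max (p x w) (normQ Q x w).
Proof. by rewrite /normQ big_cons. Qed.

Lemma normQ_nil (x : E) (w : T) : normQ ([::] : seq (E -> T -> R)) x w = 0.
Proof. by rewrite /normQ big_nil. Qed.

Lemma fs_cons p Q : finite_subfamily Pf (p :: Q) -> Pf p /\ finite_subfamily Pf Q.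
Proof. by move=> H; split; [apply: H; left|move=> q Hq; apply: H; right]. Qed.

Lemma normQ_meas (Q : seq (E -> T -> R)) (x : E) : finite_subfamily Pf Q -> measurable_fun setT (normQ Q x).
Proof.
elim: Q => [|p Q IH] HQ.
  have -> : normQ ([::] : seq (E -> T -> R)) x = fun _ => 0 by apply/funext => w; rewrite normQ_nil.
  exact: measurable_cst.
have [Hp HQ'] := fs_cons HQ.
have -> : normQ (p :: Q) x = (fun w => Num.max (p x w) (normQ Q x w)).
  by apply/funext => w; rewrite normQ_cons.
apply: measurable_maxr; last exact: IH.
exact: (sn_meas (rlc_seminorms hRLC Hp)).
Qed.

Lemma normQ_ge0 (Q : seq (E -> T -> R)) (x : E) (w : T) : 0 <= normQ Q x w.
Proof.
elim: Q => [|p Q IH]; first by rewrite normQ_nil.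
by rewrite normQ_cons le_max IH orbT.
Qed.

Lemma normQ_sc (Q : seq (E -> T -> R)) xi (x : E) : finite_subfamily Pf Q -> Kmeas xi ->
  {ae P, forall w, normQ Q (sc xi x) w = Knorm (xi w) * normQ Q x w}.
Proof.
move=> + mxi; elim: Q => [|p Q IH] HQ.
  by apply: nearW => w; rewrite !normQ_nil mulr0.
have [Hp HQ'] := fs_cons HQ.
have h1 := sn_hom (rlc_seminorms hRLC Hp) x mxi.
apply: filterS2 h1 (IH HQ') => w e1 e2.
by rewrite !normQ_cons e1 e2 maxr_pMr.
Qed.


Lemma normQ_mset (Q : seq (E -> T -> R)) (x : E) (c : R) :
  finite_subfamily Pf Q -> measurable [set w | normQ Q x w < c].
Proof. by move=> HQ; apply: mset_lt; [exact: normQ_meas|exact: measurable_cst]. Qed.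

Lemma el_c (G : set E) : el_open P Pf G -> c_open P Pf G.
Proof.
move=> HG x Gx; have [Q [HQ [eps [eps0 [lam [lam01 Hy]]]]]] := HG x Gx.
exists Q; split => //; exists (fun _ => eps / 2); split; first exact: measurable_cst.
split; first by apply: nearW => w; rewrite divr_gt0.
move=> y Hae; apply: Hy; rewrite lte_probP; last exact: normQ_mset.
rewrite pr_ae1; last first.
- apply: filterS Hae => w /le_lt_trans; apply.
  by rewrite ltr_pdivrMr // ltr_pMr // ltr1n.
- exact: normQ_mset.
by case/andP: lam01 => l0 _; rewrite ltrBlDr ltrDl.
Qed.

Section Hom.
Variable f : E -> T -> K.
Hypothesis hf : L0_module_hom P Kmeas sc f.

Lemma f0 : {ae P, forall w, f 0 w = 0}.
Proof.
have := (hf.2.1 0 0); rewrite addr0 /aeqK; apply: filterS => w h.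
by have := congr1 (fun t => t - f 0 w) h; rewrite addrK subrr => <-.
Qed.

Lemma fB (x y : E) : {ae P, forall w, f (y - x) w = f y w - f x w}.
Proof.
have := (hf.2.1 (y - x) x); rewrite subrK /aeqK; apply: filterS => w ->.
by rewrite addrK.
Qed.

End Hom.


Definition Gball (lam : R) (xi : T -> K) := Kmeas xi /\
  exists e0 : R, 0 < e0 < 1 /\ lte_prob P (1 - lam) [set w | Knorm (xi w) < e0].

Lemma Gball_open lam : 0 < lam < 1 -> L0_el_open P Kmeas Knorm (Gball lam).
Proof.
case/andP=> l0 l1 xi mxi [_ [e0 [/andP[e00 e01] Hp]]].
have mS0 : measurable [set w | Knorm (xi w) < e0].
  exact: mset_lt (HmN mxi) (measurable_cst _).
move: Hp; rewrite lte_probP // => Hp.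
have := pr_le1 P mS0 => hle1.
exists ((1 - e0) / 2); split; first lra.
exists (pr P [set w | Knorm (xi w) < e0] - (1 - lam)); split; first by apply/andP; split; lra.
move=> eta meta.
have mS1 : measurable [set w | Knorm (eta w - xi w) < (1 - e0) / 2].
  exact: mset_lt (HmNB meta mxi) (measurable_cst _).
rewrite lte_probP // => Hp2.
split => //; exists ((1 + e0) / 2); split; first by apply/andP; split; lra.
have mS2 : measurable [set w | Knorm (eta w) < (1 + e0) / 2].
  exact: mset_lt (HmN meta) (measurable_cst _).
rewrite lte_probP //.
have := prI P mS0 mS1.
have sub : [set w | Knorm (xi w) < e0] `&` [set w | Knorm (eta w - xi w) < (1 - e0) / 2]
   `<=` [set w | Knorm (eta w) < (1 + e0) / 2].
  move=> w [/= h0 h1]; rewrite -(subrK (xi w) (eta w)).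
  apply: le_lt_trans (HnD _ _) _; lra.
have := pr_le P (measurableI _ _ mS0 mS1) mS2 sub.
lra.
Qed.


Lemma measurable_inv_pos (g : T -> R) (D : set T) : measurable D ->
  measurable_fun D g -> (forall w, D w -> 0 < g w) ->
  measurable_fun D (fun w => (g w)^-1).
Proof.
move=> mD mg gp.
have H := @measurable_comp _ _ _ _ _ _ (`]0, +oo[%classic : set R) (@GRing.inv R) D g.
apply: H => //.
- by move=> _ [w Dw <-] /=; rewrite in_itv /= andbT gp.
- apply: open_continuous_measurable_fun; first exact: interval_open.
  move=> x; rewrite inE /= in_itv /= andbT => x0.
  by apply: inv_continuous; rewrite gt_eqF.
Qed.

Lemma c_el (f : E -> T -> K) : L0_module_hom P Kmeas sc f ->
  cont_c P Kmeas Knorm Pf f -> cont_el P Kmeas Knorm Pf f.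
Proof.
move=> hf Hc G' HG' x0 Gx0.
have mfx0 := hf.1 x0.
have [e' [e'0 [l' [/andP[l'0 l'1] H']]]] := HG' _ mfx0 Gx0.
pose lam := l' / 4.
have lam01 : 0 < lam < 1 by apply/andP; split; rewrite /lam; lra.
have HGo := Hc _ (Gball_open lam01).
have G0 : Gball lam (f 0).
  split; first exact: hf.1.
  exists (1/2); split; first by apply/andP; split; lra.
  have mS := mset_lt (HmN (hf.1 0)) (measurable_cst (1/2 : R)).
  rewrite lte_probP // pr_ae1 //; first by rewrite /lam; lra.
  by apply: filterS (f0 hf) => w /= ->; rewrite Hn0; lra.
have [Q [HQ [eta [meta [epos Hc0]]]]] := HGo 0 G0.
pose g z := fun w => Knorm (f z w).
have mg z : measurable_fun setT (g z) := HmN (hf.1 z).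
pose Bset z := [set w | 0 < g z w] `&` [set w | normQ Q z w <= g z w * eta w].
have mB z : measurable (Bset z).
  apply: measurableI; first exact: (@mset_lt _ _ _ (fun _ => 0) (g z) (measurable_cst (0:R)) (mg z)).
  have h2 := measurable_funM (mg z) meta.
  have := @mset_le _ _ _ (normQ Q z) (fun w => g z w * eta w) (normQ_meas z HQ) h2.
  by [].
have core z : pr P (Bset z) < lam.
  pose r := fun w => if 0 < g z w then (g z w)^-1 else 0.
  have mr : measurable_fun setT r.
    apply: measurable_fun_if => //.
    - exact: measurable_fun_ltr (measurable_cst (0:R)) (mg z).
    - apply: measurable_inv_pos.
      + by apply: (measurable_fun_ltr (measurable_cst (0:R)) (mg z)) => //.
      + exact: measurable_funS (mg z).
      + by move=> w [_ /= ->].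
  pose xr := fun w => \1_(Bset z) w * r w.
  have mxr : measurable_fun setT xr.
    exact: measurable_funM (measurable_indic (mB z)) mr.
  pose xi := fun w => emb (xr w).
  have mxi : Kmeas xi := Hmemb mxr.
  have Hy : Gball lam (f (sc xi z)).
    apply: Hc0; apply: filterS2 (normQ_sc z HQ mxi) epos => w e1 ep.
    rewrite subr0 e1 Hnemb /xr indicE.
    have [[gp hle]|nB] := pselect (Bset z w).
      rewrite mem_set //= mul1r /r gp ger0_norm; last by rewrite invr_ge0 ltW.
      by rewrite ler_pdivrMl.
    by rewrite memNset //= mul0r normr0 mul0r ltW.
  case: Hy => _ [e0 [/andP[e00 e01] Hp]].
  have mS := mset_lt (mg (sc xi z)) (measurable_cst e0).
  move: Hp; rewrite lte_probP // => Hp.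
  have : pr P [set w | g (sc xi z) w < e0] <= pr P (~` Bset z).
    apply: (pr_ae (P := P)) mS (measurableC (mB z)) _.
    apply: filterS (hf.2.2 xi z mxi) => w e1 h hB; move: h.
    rewrite /g /= e1 HnM Hnemb /xr indicE mem_set //= mul1r /r.
    case: hB => /= gp _; rewrite gp ger0_norm; last by rewrite invr_ge0 ltW.
    rewrite mulVf ?gt_eqF //.
    by move=> h; lra.
  by rewrite prC //; lra.
have l4 : 0 < l' / 4 by lra.
have [d0 [d00 hd0]] := small_set meta epos l4.
exists Q; split => //; exists (e' * d0); split; first by rewrite mulr_gt0.
exists (l' / 4); split; first by apply/andP; split; lra.
move=> y Hy; rewrite /=; apply: H' (hf.1 y) _.
pose z := y - x0.
have mT : measurable [set w | Knorm (f y w - f x0 w) < e'].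
  exact: mset_lt (HmNB (hf.1 y) mfx0) (measurable_cst _).
rewrite lte_probP //.
have mS : measurable [set w | Knorm (f z w) < e'].
  exact: mset_lt (mg z) (measurable_cst _).
have h1 : pr P [set w | Knorm (f z w) < e'] <= pr P [set w | Knorm (f y w - f x0 w) < e'].
  by apply: (pr_ae (P := P)) mS mT _; apply: filterS (fB hf x0 y) => w /= e; rewrite e.
have mSd := normQ_mset z (e' * d0) HQ.
have mEd : measurable [set w | eta w < d0] := mset_lt meta (measurable_cst d0).
move: Hy; rewrite lte_probP // => Hy.
have sub : ~` [set w | Knorm (f z w) < e'] `<=` Bset z `|`
    (~` [set w | normQ Q z w < e' * d0] `|` [set w | eta w < d0]).
  move=> w /= nS.
  have ge : e' <= g z w by rewrite leNgt; apply/negP.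
  have [hB|nB] := pselect (Bset z w); first by left.
  right; have [hE|nE] := pselect (eta w < d0); first by right.
  left => hSd; apply: nB; split => /=; first exact: lt_le_trans e'0 ge.
  apply: le_trans (ltW hSd) _; apply: ler_pM => //; [exact: ltW|exact: ltW|].
  by rewrite leNgt; apply/negP.
have := pr_le P (measurableC mS) (measurableU _ _ (mB z) (measurableU _ _ (measurableC mSd) mEd)) sub.
have := prU P (mB z) (measurableU _ _ (measurableC mSd) mEd).
have := prU P (measurableC mSd) mEd.
have := core z.
rewrite !prC //.
rewrite /lam; lra.
Qed.

Lemma dual_eq_gen : forall f : E -> T -> K, L0_module_hom P Kmeas sc f ->
  (cont_c P Kmeas Knorm Pf f <-> cont_el P Kmeas Knorm Pf f).
Proof.
move=> f hf; split; first exact: c_el.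
by move=> H G HG; apply: el_c; exact: H.
Qed.

End Gen2.

Lemma absC_normc (R : realType) (z : R[i]) : absC z = ComplexField.Normc.normc z.
Proof. by case: z. Qed.

Theorem theorem1p1 (R : realType) (d : measure_display) (T : measurableType d)
    (P : probability T R) :
  dual_equality_statement P (K := R) (@measR R d T) (fun x : R => `|x|%R) /\
  dual_equality_statement P (K := R[i]) (@measC R d T) (@absC R).
Proof.
split; move=> E sc Pf hRLC f hf.
- apply: (@dual_eq_gen R d T P R (@measR R d T) (fun x : R => `|x|) (fun r => r)
     _ _ _ _ _ _ _ _ E sc Pf hRLC f hf) => //.
  + exact: normrM.
  + exact: ler_normD.
  + by rewrite normr0.
  + move=> xi mxi; exact: measurableT_comp mxi.
  + move=> xi zeta mxi mzeta; apply: measurableT_comp => //.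
    exact: measurable_funB.
- have mabs (u v : T -> R) : measurable_fun setT u -> measurable_fun setT v ->
      measurable_fun setT (fun w => Num.sqrt (u w ^+ 2 + v w ^+ 2)).
    move=> mu mv; apply: measurableT_comp.
      exact: (continuous_measurable_fun (@sqrt_continuous R)).
    by apply: measurable_funD; apply: measurable_funX.
  apply: (@dual_eq_gen R d T P R[i] (@measC R d T) (@absC R) (fun r : R => (r%:C)%C : R[i])
     _ _ _ _ _ _ _ _ E sc Pf hRLC f hf) => //.
  + by move=> a b; rewrite !absC_normc ComplexField.Normc.normcM.
  + by move=> a b; rewrite !absC_normc le_normcD.
  + by rewrite absC_normc ComplexField.Normc.normc0.
  + by move=> a; rewrite /absC sqrtr_ge0.
  + by move=> r; rewrite /absC /= expr0n /= addr0 sqrtr_sqr.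
  + by move=> xi [mre mim]; exact: mabs.
  + move=> xi zeta [mre mim] [mre' mim'].
    have -> : (fun w => absC (xi w - zeta w)) = (fun w => Num.sqrt
      ((complex.Re (xi w) - complex.Re (zeta w)) ^+ 2 +
       (complex.Im (xi w) - complex.Im (zeta w)) ^+ 2)).
      by apply/funext => w; rewrite /absC; case: (xi w); case: (zeta w).
    by apply: mabs; apply: measurable_funB.
Qed.
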